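(* Let $f:\mathbb{R}\to[0,\infty)$ be a bounded probability density. Let $h\in L^\infty(\mathbb{R})$ with $h\ge0$, and let $\ell\in\mathbb{N}$ be such that $$\sup_{x\in[a,a+1)}f_\ell(x)\le\int_{a-1}^{a+2}h(w)\,\mathrm{d}w\qquad\text{for all }a\in\mathbb{R}.$$ Then $$\sup_{x\in[a,a+1)}f_{2\ell}(x)\le\int_{a-1}^{a+2}\Phi_\ell(h)(w)\,\mathrm{d}w\qquad\text{for all }a\in\mathbb{R}.$$
   Context: $f_1:=f$, $f_{k+1}:=f_k*f$, i.e. $f_{k+1}(x)=\int_\mathbb{R} f_k(x-y)f(y)\,\mathrm{d}y$. For $n\in\mathbb{N}$ and $h\in L^\infty(\mathbb{R})$, the function $\Phi_n(h)$ is defined by $\Phi_n(h)(x):=2\int_{\{z:\,|z|>(|x|-3)/2\}}f_n(z)\,h(x-z)\,\mathrm{d}z$ for $x\in\mathbb{R}$. *)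

(* Defs.v *)
From HB Require Import structures.
From mathcomp Require Import all_boot all_order all_algebra.
From mathcomp Require Import all_classical all_reals all_analysis.
Set Implicit Arguments. Unset Strict Implicit. Unset Printing Implicit Defensive.
Import Order.TTheory GRing.Theory Num.Theory.
Import numFieldNormedType.Exports.
Local Open Scope classical_set_scope.
Local Open Scope ring_scope.
Local Open Scope ereal_scope.

Section Defs.
Variable R : realType.
Local Notation mu := (@lebesgue_measure R).

(* fconv f n = f_{n+1}; values in \bar R (integrals of nonnegative functions) *)
Fixpoint fconv (f : R -> R) (n : nat) : R -> \bar R :=
  match n with
  | 0 => fun x => (f x)%:E
  | n'.+1 => fun x => \int[mu]_(y in setT) (fconv f n' (x - y)%R * (f y)%:E)
  end.

(* f_k, for k >= 1 (f_0 is junk = f) *)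
Definition fpow (f : R -> R) (k : nat) : R -> \bar R := fconv f k.-1.

Definition Phi (f : R -> R) (n : nat) (h : R -> R) (x : R) : \bar R :=
  2%:E * \int[mu]_(z in [set z : R | ((`|x| - 3) / 2 < `|z|)%R])
            (fpow f n z * (h (x - z)%R)%:E).

Definition bounded_density (f : R -> R) : Prop :=
  [/\ measurable_fun setT f, (forall x, (0 <= f x)%R),
      \int[mu]_(x in setT) (f x)%:E = 1
    & exists M : R, forall x, (f x <= M)%R].

Definition Linfty_nonneg (h : R -> R) : Prop :=
  [/\ measurable_fun setT h, (forall x, (0 <= h x)%R)
    & exists M : R, {ae mu, forall x, (`|h x| <= M)%R}].
End Defs.

(* Main.v *)
From mathcomp Require Import all_boot all_order all_algebra.
Require Import Defs.
From mathcomp Require Import all_classical all_reals all_analysis.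
From mathcomp Require Import measurable_realfun.
From mathcomp.algebra_tactics Require Import ring lra.
Import Order.TTheory GRing.Theory Num.Theory.
Local Open Scope classical_set_scope.
Local Open Scope ring_scope.
Local Open Scope ereal_scope.

Section ge0_le_integral_nm.
Context d (T : measurableType d) (R : realType).
Variable mu : {measure set T -> \bar R}.
Variables (D : set T) (mD : measurable D) (f1 f2 : T -> \bar R).
Hypothesis f10 : forall x, D x -> 0 <= f1 x.
Hypothesis mf1 : measurable_fun D f1.

Import HBNNSimple.

Lemma ge0_le_integral_nm : (forall x, D x -> f1 x <= f2 x) ->
  \int[mu]_(x in D) f1 x <= \int[mu]_(x in D) f2 x.
Proof.
move=> f12; rewrite !(integral_mkcond D).
set h1 := f1 \_ D; set h2 := f2 \_ D.
have h10 x : 0 <= h1 x by apply: erestrict_ge0.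
have h20 x : 0 <= h2 x.
  by apply: erestrict_ge0 => // t /[dup] Dt /f12; apply: le_trans; exact: f10.
have mh1 : measurable_fun setT h1 by exact/(measurable_restrictT _ _).1.
have h12 x : h1 x <= h2 x by apply: lee_restrict.
pose g1 := nnsfun_approx measurableT mh1.
rewrite (@nd_ge0_integral_lim _ _ _ _ _ g1)//; last 2 first.
  by move=> x m n mn; exact/lefP/nd_nnsfun_approx.
  by move=> x; exact: cvg_nnsfun_approx.
apply: lime_le.
  by apply: is_cvg_sintegral => // t m n mn; exact/lefP/nd_nnsfun_approx.
near=> n; rewrite ge0_integralTE//; apply: ereal_sup_ubound => /=.
exists (g1 n) => // t; rewrite (le_trans _ (h12 _))//.
by rewrite /g1 nnsfun_approxE; apply: le_approx.
Unshelve. all: by end_near. Qed.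
End ge0_le_integral_nm.
Section S.
Variable R : realType.
Local Notation mu := (@lebesgue_measure R).

Lemma mshift (c : R) : measurable_fun setT (fun x : R => (x + c)%R).
Proof. exact: measurable_realfun.measurable_funD. Qed.

Lemma lebesgue_measure_shift (c : R) (A : set R) : measurable A ->
  pushforward mu (fun x : R => (x + c)%R) A = mu A.
Proof.
move=> mA; apply: esym.
have mf : measurable_fun setT ((fun x : R => (x + c)%R) : R -> measurableTypeR R) by exact: mshift.
apply: (lebesgue_measure_unique (mu := pushforward mu ((fun x : R => (x + c)%R) : R -> measurableTypeR R))) => //=.
move=> _ [[a b]] _ <-.
rewrite /pushforward (_ : _ @^-1` _ = `](a - c)%R, (b - c)%R]%classic); last first.
  apply/seteqP; split => x /=; rewrite !in_itv /= => /andP[h1 h2]; apply/andP; split.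
  - by rewrite ltrBlDr.
  - by rewrite lerBrDr.
  - by rewrite -ltrBlDr.
  - by rewrite -lerBrDr.
rewrite !lebesgue_measure_itv/= !lte_fin ltrD2r.
by case: ifP => // _; rewrite -!EFinD; congr EFin; lra.
Qed.

Lemma integral_shift (g : R -> \bar R) (c : R) :
  measurable_fun setT g -> (forall x, 0 <= g x) ->
  \int[mu]_x g (x + c)%R = \int[mu]_x g x.
Proof.
move=> mg g0.
have mf : measurable_fun setT ((fun x : R => (x + c)%R) : R -> measurableTypeR R) by exact: mshift.
have -> : \int[mu]_x g x = \int[pushforward mu ((fun x : R => (x + c)%R) : R -> measurableTypeR R)]_x g x.
  by apply: (eq_measure_integral (pushforward mu ((fun x : R => (x + c)%R) : R -> measurableTypeR R))) => //= A mA AS; exact/esym/lebesgue_measure_shift.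
by rewrite ge0_integral_pushforward//= preimage_setT.
Qed.

Lemma integral_opp (g : R -> \bar R) :
  measurable_fun setT g -> (forall x, 0 <= g x) ->
  \int[mu]_x g (- x)%R = \int[mu]_x g x.
Proof.
move=> mg g0.
have -> : \int[mu]_x g x = \int[pushforward mu (-%R : _ -> measurableTypeR R)]_x g x.
  by apply: (eq_measure_integral (pushforward mu (-%R : _ -> measurableTypeR R))) => //= A mA AS; exact/esym/lebesgue_measureN.
by rewrite ge0_integral_pushforward//= preimage_setT.
Qed.

Lemma integral_refl (g : R -> \bar R) (c : R) :
  measurable_fun setT g -> (forall x, 0 <= g x) ->
  \int[mu]_x g (c - x)%R = \int[mu]_x g x.
Proof.
move=> mg g0.
have mh : measurable_fun setT (fun y : R => g (y + c)%R).
  exact: measurableT_comp mg (mshift c).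
rewrite -(integral_shift _ c mg g0) -(integral_opp _ mh) //.
by apply: eq_integral => x _; rewrite addrC.
Qed.

Definition conv (g k : R -> \bar R) (x : R) : \bar R :=
  \int[mu]_y (g (x - y)%R * k y).

Lemma msub_prod : measurable_fun setT (fun p : R * R => (p.1 - p.2)%R).
Proof. exact: measurable_funB. Qed.

Lemma conv_ge0 g k : (forall x, 0 <= g x) -> (forall x, 0 <= k x) ->
  forall x, 0 <= conv g k x.
Proof. by move=> g0 k0 x; apply: integral_ge0 => y _; apply: mule_ge0. Qed.

Lemma conv_meas g k : measurable_fun setT g -> measurable_fun setT k ->
  (forall x, 0 <= g x) -> (forall x, 0 <= k x) ->
  measurable_fun setT (conv g k).
Proof.
move=> mg mk g0 k0.
have M : measurable_fun setT (fun p : R * R => g (p.1 - p.2)%R * k p.2).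
  apply: emeasurable_funM.
    exact: measurableT_comp mg msub_prod.
  exact: measurableT_comp mk measurable_snd.
exact: (@measurable_fun_fubini_tonelli_F _ _ _ _ _ mu _ M (fun p => mule_ge0 (g0 _) (k0 _))).
Qed.

Lemma conv_assoc g k p :
  measurable_fun setT g -> measurable_fun setT k -> measurable_fun setT p ->
  (forall x, 0 <= g x) -> (forall x, 0 <= k x) -> (forall x, 0 <= p x) ->
  forall x, conv (conv g k) p x = conv g (conv k p) x.
Proof.
move=> mg mk mp g0 k0 p0 x; rewrite /conv.
transitivity (\int[mu]_y \int[mu]_u (g (x - u)%R * k (u - y)%R * p y)).
  apply: eq_integral => y _.
  have mgk : measurable_fun setT (fun z : R => g (x - y - z)%R * k z).
    apply: emeasurable_funM => //.
    exact: measurableT_comp mg (measurable_funB (measurable_cst (x - y)%R) (@measurable_id _ _ setT)).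
  rewrite -ge0_integralZr//; last by move=> z _; apply: mule_ge0.
  have mphi : measurable_fun setT (fun z : R => g (x - y - z)%R * k z * p y).
    exact: emeasurable_funM.
  rewrite -(integral_shift _ (- y)%R mphi); last by move=> z; rewrite !mule_ge0.
  apply: eq_integral => u _.
  by have -> : (x - y - (u + - y) = x - u)%R by ring.
transitivity (\int[mu]_u \int[mu]_y (g (x - u)%R * k (u - y)%R * p y)).
  have M : measurable_fun setT (fun q : R * R => g (x - q.2)%R * k (q.2 - q.1)%R * p q.1).
    apply: emeasurable_funM; last exact: measurableT_comp mp measurable_fst.
    apply: emeasurable_funM.
      exact: measurableT_comp mg (measurable_funB (measurable_cst x) measurable_snd).
    exact: measurableT_comp mk (measurable_funB measurable_snd measurable_fst).
  have := (@fubini_tonelli _ _ _ _ _ mu mu _ M (fun q => mule_ge0 (mule_ge0 (g0 _) (k0 _)) (p0 _))).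
  move=> ->. done.
apply: eq_integral => u _.
under eq_integral do rewrite -muleA.
rewrite ge0_integralZl//.
- apply: emeasurable_funM => //.
  exact: measurableT_comp mk (measurable_funB (measurable_cst u) (@measurable_id _ _ setT)).
- by move=> y _; apply: mule_ge0.
Qed.

Section fconv_facts.
Variable f : R -> R.
Hypothesis mf : measurable_fun setT f.
Hypothesis f0 : forall x, (0 <= f x)%R.

Lemma fconv_meas n : measurable_fun setT (fconv f n) /\ forall x, 0 <= fconv f n x.
Proof.
elim: n => [|n [IHm IH0]].
  split; last by move=> x /=; rewrite lee_fin.
  exact/measurable_EFinP.
have E : fconv f n.+1 = conv (fconv f n) (fun y => (f y)%:E) by [].
rewrite E; split.
  apply: (conv_meas _ _ IHm _ IH0); first exact/measurable_EFinP.
  by move=> x; rewrite lee_fin.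
by apply: conv_ge0 => // x; rewrite lee_fin.
Qed.

Lemma fconv_add n m x : fconv f (n + m).+1 x = conv (fconv f n) (fconv f m) x.
Proof.
elim: m x => [|m IH] x; first by rewrite addn0.
rewrite addnS.
transitivity (conv (conv (fconv f n) (fconv f m)) (fconv f 0) x).
  change (conv (fconv f (n + m).+1) (fconv f 0) x = conv (conv (fconv f n) (fconv f m)) (fconv f 0) x).
  by rewrite /conv; apply: eq_integral => y _; rewrite IH.
have [m1 p1] := fconv_meas n; have [m2 p2] := fconv_meas m; have [m3 p3] := fconv_meas 0.
by rewrite conv_assoc.
Qed.
End fconv_facts.

Lemma stepA (g : R -> \bar R) (x : R) (B : set R) :
  measurable_fun setT g -> (forall y, 0 <= g y) -> measurable B ->
  (forall y, ~ B y -> B (x - y)%R) ->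
  conv g g x <= 2%:E * \int[mu]_y (g (x - y)%R * (g y * (\1_B y)%:E)).
Proof.
move=> mg g0 mB HB.
pose q y := g (x - y)%R * (g y * (\1_B y)%:E).
have mxy : measurable_fun setT (fun y : R => (x - y)%R).
  exact: (measurable_funB (measurable_cst x) (@measurable_id _ _ setT)).
have mgx : measurable_fun setT (fun y : R => g (x - y)%R) by exact: measurableT_comp mg mxy.
have mq : measurable_fun setT q.
  apply: emeasurable_funM => //; apply: emeasurable_funM => //.
  exact/measurable_EFinP/measurable_indic.
have q0 y : 0 <= q y by rewrite /q !mule_ge0// lee_fin.
have mqx : measurable_fun setT (fun y : R => q (x - y)%R) by exact: measurableT_comp mq mxy.
have -> : 2%:E * \int[mu]_y q y = \int[mu]_y (q y + q (x - y)%R).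
  rewrite ge0_integralD//.
  rewrite integral_refl//.
  by rewrite -mule2n -mule_natl.
apply: ge0_le_integral => //.
- by move=> y _; apply: mule_ge0.
- exact: emeasurable_funM mgx mg.
- exact: emeasurable_funD mq mqx.
move=> y _; rewrite /q.
have [yB|yB] := pselect (B y).
  rewrite indicE (mem_set yB) mule1; apply: leeDl.
  by rewrite !mule_ge0// lee_fin.
have := HB _ yB => xyB.
rewrite [\1_B (x - y)%R]indicE (mem_set xyB) mule1 (_ : (x - (x - y) = y)%R); last by ring.
rewrite muleC; apply: leeDr.
by rewrite !mule_ge0// lee_fin.
Qed.

Lemma stepB (g : R -> \bar R) (h : R -> R) (a x y : R) :
  measurable_fun setT h -> (forall w, (0 <= h w)%R) ->
  (forall b t, (b <= t)%R -> (t < b + 1)%R ->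
     g t <= \int[mu]_(w in `[(b - 1)%R, (b + 2)%R]%classic) (h w)%:E) ->
  (a <= x)%R -> (x < a + 1)%R ->
  g (x - y)%R <= \int[mu]_w ((\1_(`[(a - 1)%R, (a + 2)%R]%classic) w)%:E * (h (w - y)%R)%:E).
Proof.
move=> mh h0 Hg ax xa.
apply: le_trans (Hg (a - y)%R (x - y)%R _ _) _; [lra|lra|].
rewrite integral_mkcond epatch_indic.
have mJ : measurable (`[(a - y - 1)%R, (a - y + 2)%R]%classic : set R) by [].
rewrite -[X in X <= _](integral_shift _ (- y)%R).
- rewrite le_eqVlt; apply/orP; left; apply/eqP; apply: eq_integral => w _ /=.
  rewrite muleC; congr (_ * _)%E; congr EFin; rewrite !indicE.
  congr (_%:R)%R; congr nat_of_bool; apply/idP/idP => /set_mem; rewrite /= !in_itv /= => /andP[h1 h2]; apply/mem_set; rewrite /= in_itv /=; apply/andP; split; lra.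
- apply: emeasurable_funM; first exact/measurable_EFinP.
  exact/measurable_EFinP/measurable_indic.
- by move=> w /=; rewrite mule_ge0// lee_fin.
Qed.

Lemma main_bound (g : R -> \bar R) (h : R -> R) (a x : R) :
  measurable_fun setT g -> (forall y, 0 <= g y) ->
  measurable_fun setT h -> (forall w, (0 <= h w)%R) ->
  (forall b t, (b <= t)%R -> (t < b + 1)%R ->
     g t <= \int[mu]_(w in `[(b - 1)%R, (b + 2)%R]%classic) (h w)%:E) ->
  (a <= x)%R -> (x < a + 1)%R ->
  conv g g x <= \int[mu]_(w in `[(a - 1)%R, (a + 2)%R]%classic)
     (2%:E * \int[mu]_(z in [set z : R | ((`|w| - 3) / 2 < `|z|)%R])
                (g z * (h (w - z)%R)%:E)).
Proof.
move=> mg g0 mh h0 Hg ax xa.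
set I := `[(a - 1)%R, (a + 2)%R]%classic.
pose B := [set y : R | (`|x| / 2 <= `|y|)%R].
have mB : measurable B.
  suff -> : B = Num.Def.normr @^-1` `[(`|x| / 2)%R, +oo[.
    by rewrite -[X in measurable X]setTI; apply: normr_measurable.
  by apply/seteqP; split => y; rewrite /B /= in_itv /= andbT.
have HB : forall y, ~ B y -> B (x - y)%R.
  move=> y; rewrite /B /= => /negP; rewrite -ltNge => hy.
  have := lerB_dist x y; lra.
apply: le_trans (stepA _ _ _ mg g0 mB HB) _.
pose F := fun q : R * R => (\1_I q.2)%:E * (h (q.2 - q.1))%:E * (g q.1 * (\1_B q.1)%:E).
have mI : measurable I by exact: measurable_itv.
have mF : measurable_fun setT F.
  apply: emeasurable_funM; last first.
    apply: emeasurable_funM; first exact: measurableT_comp mg measurable_fst.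
    apply/measurable_EFinP; exact: (measurableT_comp (measurable_indic mB) measurable_fst).
  apply: emeasurable_funM.
    apply/measurable_EFinP; exact: (measurableT_comp (measurable_indic mI) measurable_snd).
  apply/measurable_EFinP; apply: measurableT_comp mh _.
  exact: measurable_funB measurable_snd measurable_fst.
have F0 q : 0 <= F q by rewrite /F !mule_ge0// lee_fin.
have mFy : measurable_fun setT (fun y => \int[mu]_w F (y, w)).
  exact: (@measurable_fun_fubini_tonelli_F _ _ _ _ _ mu _ mF F0).
have mFw : measurable_fun setT (fun w => \int[mu]_y F (y, w)).
  exact: (@measurable_fun_fubini_tonelli_G _ _ _ _ _ mu _ mF F0).
apply: (@le_trans _ _ (2%:E * \int[mu]_y \int[mu]_w F (y, w))).
  rewrite lee_wpmul2l //.
  apply: ge0_le_integral => //.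
  - by move=> y _; rewrite !mule_ge0// lee_fin.
  - apply: emeasurable_funM.
      apply: measurableT_comp mg _.
      exact: (measurable_funB (measurable_cst x) (@measurable_id _ _ setT)).
    apply: emeasurable_funM => //.
    exact/measurable_EFinP/measurable_indic.
  - move=> y _; rewrite /F /= ge0_integralZr //.
    + apply: lee_wpmul2r; first by rewrite mule_ge0// lee_fin.
      exact: stepB.
    + apply: emeasurable_funM.
        exact/measurable_EFinP/measurable_indic.
      apply/measurable_EFinP; apply: measurableT_comp mh _.
      exact: (measurable_funB (@measurable_id _ _ setT) (measurable_cst y)).
    + by move=> w _; rewrite mule_ge0// lee_fin.
    + by rewrite mule_ge0// lee_fin.
have := (@fubini_tonelli _ _ _ _ _ mu mu _ mF F0) => /= ->.
rewrite -ge0_integralZl //; last by move=> w _; apply: integral_ge0.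
rewrite [X in _ <= X]integral_mkcond.
apply: ge0_le_integral_nm => //.
- by move=> w _; rewrite mule_ge0//; apply: integral_ge0.
- exact: emeasurable_funM.
move=> w _; rewrite patchE; case: ifPn => wI; last first.
  rewrite (eq_integral (fun _ => 0)); first by rewrite integral0 mule0.
  move=> y _; rewrite /F /= indicE.
  have -> : (w \in I) = false by exact: (negbTE wI).
  by rewrite !mul0e.
apply: lee_wpmul2l; first by rewrite lee_fin.
rewrite [X in _ <= X]integral_mkcond.
apply: ge0_le_integral_nm => //.
- exact: (measurableT_comp mF (measurable_fun_pair (@measurable_id _ _ setT) (measurable_cst w))).
move=> y _; rewrite /F /= indicE wI mul1e patchE.
have [yB|yB] := pselect (B y); last first.
  rewrite indicE (memNset yB) !mule0.
  by case: ifPn => // _; rewrite mule_ge0// lee_fin.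
rewrite indicE (mem_set yB) mule1.
have yS : [set z : R | ((`|w| - 3) / 2 < `|z|)%R] y.
  move: wI; rewrite /I inE /= in_itv /= => /andP[w1 w2].
  move: yB; rewrite /B /= => yB.
  have := ler_normD x ((w : R) - x)%R; rewrite (addrC x) subrK => hw.
  have : (`|w - x| <= 2)%R by rewrite ler_norml; apply/andP; split; lra.
  lra.
by rewrite (mem_set yS) muleC.
Qed.
End S.

Theorem lemma3p3 (R : realType) (f h : R -> R) (l : nat) :
  bounded_density f -> Linfty_nonneg h -> (1 <= l)%N ->
  (forall a : R,
     ereal_sup [set fpow f l x | x in `[a, (a + 1)%R[%classic] <=
     \int[@lebesgue_measure R]_(w in `[(a - 1)%R, (a + 2)%R]%classic) (h w)%:E) ->
  forall a : R,
    ereal_sup [set fpow f (2 * l) x | x in `[a, (a + 1)%R[%classic] <=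
    \int[@lebesgue_measure R]_(w in `[(a - 1)%R, (a + 2)%R]%classic) Phi f l h w.
Proof.
move=> [mf f0 _ _] [mh h0 _] l1 Hyp a.
case: l l1 Hyp => // k _ Hyp.
have [mg g0] := @fconv_meas R f mf f0 k.
apply: ub_ereal_sup => _ [x xI <-].
have -> : fpow f (2 * k.+1) x = @conv R (fconv f k) (fconv f k) x :> \bar R.
  rewrite /fpow (_ : (2 * k.+1).-1 = (k + k).+1)%N; last by rewrite mul2n doubleS /= addnn.
  exact: (@fconv_add R f mf f0).
move: xI; rewrite /= in_itv /= => /andP[ax xa].
apply: main_bound => //.
move=> b t bt tb; apply: le_trans (Hyp b).
apply: ereal_sup_ubound; exists t => //.
by rewrite /= in_itv /= bt tb.
Qed.
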